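(* For all $P,Q\in\Gamma_n$, $$0\le M_{SG}(P\|Q)\le 2\,h(P\|Q)\qquad\text{and}\qquad 0\le \xi_{SG}(P\|Q)\le 2\,\xi_{h}(P\|Q).$$
   Context: $\Gamma_n=\{P=(p_1,\dots,p_n): p_i>0,\ \sum_i p_i=1\}$, $n\ge2$. For $f:(0,\infty)\to\mathbb{R}$, $C_f(P\|Q)=\sum_{i=1}^n q_i f(p_i/q_i)$; for differentiable $f$, $E_f(P\|Q)=\sum_{i=1}^n (p_i-q_i) f'(p_i/q_i)$ and $\xi_f=E_f-C_f$. With $f_{SG}(x)=\sqrt{(x^2+1)/2}-\sqrt x$ and $f_h(x)=\frac12(\sqrt x-1)^2$: $M_{SG}=C_{f_{SG}}=\sum_i\big(\sqrt{(p_i^2+q_i^2)/2}-\sqrt{p_iq_i}\big)$, $h=C_{f_h}=\frac12\sum_i(\sqrt{p_i}-\sqrt{q_i})^2$, $\xi_{SG}=\xi_{f_{SG}}$, $\xi_h=\xi_{f_h}$. *)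

(* Defs.v *)
From mathcomp Require Import all_boot all_order all_algebra.
From mathcomp Require Import all_classical all_reals all_analysis.
Set Implicit Arguments. Unset Strict Implicit. Unset Printing Implicit Defensive.
Import Order.TTheory GRing.Theory Num.Theory.
Local Open Scope ring_scope.

Definition Gamma (R : realType) (n : nat) (P : 'I_n -> R) : Prop :=
  (forall i, 0 < P i) /\ \sum_(i < n) P i = 1.

Definition Cf (R : realType) (n : nat) (f : R -> R) (P Q : 'I_n -> R) : R :=
  \sum_(i < n) Q i * f (P i / Q i).

Definition Ef (R : realType) (n : nat) (f : R -> R) (P Q : 'I_n -> R) : R :=
  \sum_(i < n) (P i - Q i) * derive1 f (P i / Q i).

Definition xi (R : realType) (n : nat) (f : R -> R) (P Q : 'I_n -> R) : R :=
  Ef f P Q - Cf f P Q.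

Definition f_SG (R : realType) (x : R) : R :=
  Num.sqrt ((x ^+ 2 + 1) / 2) - Num.sqrt x.

Definition f_h (R : realType) (x : R) : R :=
  (Num.sqrt x - 1) ^+ 2 / 2.

Definition M_SG (R : realType) (n : nat) (P Q : 'I_n -> R) : R := Cf (@f_SG R) P Q.
Definition hdiv (R : realType) (n : nat) (P Q : 'I_n -> R) : R := Cf (@f_h R) P Q.
Definition xi_SG (R : realType) (n : nat) (P Q : 'I_n -> R) : R := xi (@f_SG R) P Q.
Definition xi_h (R : realType) (n : nat) (P Q : 'I_n -> R) : R := xi (@f_h R) P Q.

(* Main.v *)
Require Import Defs.
From mathcomp Require Import all_boot all_order all_algebra.
From mathcomp Require Import all_classical all_reals all_analysis.
Import Order.TTheory GRing.Theory Num.Theory.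
Local Open Scope ring_scope.

Lemma dSG (R : realType) (x : R) : 0 < x ->
  derive1 (@f_SG R) x =
  x / (2 * Num.sqrt ((x^+2+1)/2)) - (2 * Num.sqrt x)^-1.
Proof.
move=> x0.
set g := (fun y : R => (y^+2+1)/2).
have gx0 : 0 < g x by rewrite /g; apply: divr_gt0 => //; apply: ltr_wpDl; [exact: sqr_ge0|].
have hg : is_derive x 1 g x.
  have -> : g = 2^-1 *: ((@idfun R) ^+ 2 + cst 1).
    by apply/funext => y /=; rewrite /g /GRing.scale /= mulrC.
  apply: is_derive_eq.
  rewrite /GRing.scale /= expr1 mulr1 addr0 mulrA mulVf //.
  by rewrite mul1r.
have h1 : is_derive x 1 (Num.sqrt \o g) ((2 * Num.sqrt (g x))^-1 * x).
  exact: (is_derive1_comp (is_derive1_sqrt gx0) hg).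
have -> : @f_SG R = (Num.sqrt \o g) - Num.sqrt by apply/funext => y.
rewrite derive1E.
have h2 := is_derive1_sqrt x0.
case: (is_deriveB h1 h2) => _ ->.
by rewrite mulrC.
Qed.

Lemma dh (R : realType) (x : R) : 0 < x ->
  derive1 (@f_h R) x = (Num.sqrt x - 1) / (2 * Num.sqrt x).
Proof.
move=> x0.
have -> : @f_h R = (Num.sqrt - cst 1) ^+ 2 * cst (2^-1).
  by apply/funext => y /=; rewrite /f_h.
have h2 := is_derive1_sqrt x0.
have h3 : is_derive x 1 (Num.sqrt - cst 1) ((2 * Num.sqrt x)^-1).
  apply: is_derive_eq; by rewrite subr0.
rewrite derive1E; case: (is_deriveM (is_deriveX 2 h3) (is_derive_cst (2^-1 : R) x 1)) => _ ->.
rewrite /GRing.scale /= mulr0 add0r expr1 !mulrA mulVf ?mul1r //.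
Qed.

From mathcomp Require Import ring lra.
Lemma core1 {R : realType} (t S : R) : 0 < t -> 0 < S ->
  S^+2 = ((t^+2)^+2+1)/2 -> 0 <= S - t <= 2 * ((t-1)^+2/2).
Proof.
move=> t0 S0 hS.
have A : t <= S.
  rewrite leNgt; apply/negP => St.
  have H1 : S^+2 < t^+2 by nra.
  have H2 := sqr_ge0 (t^+2-1).
  rewrite hS in H1; nra.
have B : S <= t^+2 - t + 1.
  rewrite leNgt; apply/negP => St.
  have H1 : (t^+2 - t + 1)^+2 < S^+2 by nra.
  rewrite hS in H1.
  have H2 := sqr_ge0 ((t-1)^+2).
  nra.
apply/andP; split; first by rewrite subr_ge0.
nra.
Qed.

Lemma core2 {R : realType} (t S : R) : 0 < t -> 0 < S ->
  S^+2 = ((t^+2)^+2+1)/2 ->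
  0 <= (t^+2-1)*(t^+2/(2*S) - (2*t)^-1) - (S - t) <=
  2*((t^+2-1)*((t-1)/(2*t)) - (t-1)^+2/2).
Proof.
move=> t0 S0 hS.
have /andP[A B] := core1 _ _ t0 S0 hS.
have C : t^+2 + 1 <= 2 * S.
  rewrite leNgt; apply/negP => St.
  have H1 : (2*S)^+2 < (t^+2 + 1)^+2 by nra.
  have H2 := sqr_ge0 (t^+2-1).
  rewrite exprMn hS in H1; nra.
have tn : t != 0 by rewrite gt_eqF.
have Sn : S != 0 by rewrite gt_eqF.
have -> : (t^+2-1)*(t^+2/(2*S) - (2*t)^-1) - (S - t) =
   ((t^+2-1)*(t^+3 - S) - 2*t*S^+2 + 2*t^+2*S)/(2*t*S) by field; rewrite ?tn ?Sn.
rewrite hS.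
have -> : (t^+2-1)*(t^+3 - S) - 2*t*(((t^+2)^+2+1)/2) + 2*t^+2*S
   = (t^+2+1)*(S-t) by field; rewrite ?tn ?Sn.
have -> : 2*((t^+2-1)*((t-1)/(2*t)) - (t-1)^+2/2) = (t-1)^+2/t by field; rewrite ?tn ?Sn.
have P : 0 < 2*t*S by rewrite !mulr_gt0.
apply/andP; split.
  apply: divr_ge0; last exact: ltW.
  apply: mulr_ge0; [nra | exact: A].
have -> : (t-1)^+2/t = (2*S*(t-1)^+2)/(2*t*S) by field; rewrite ?tn ?Sn.
rewrite ler_pM2r ?invr_gt0 //.
have E : 2*S*(t-1)^+2 - (t^+2+1)*(S-t) =
  (t-1)^+2*(2*S - (t^+2+1)) + (t^+2+1)*((t-1)^+2 - (S-t)) by ring.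
rewrite -subr_ge0 E addr_ge0 // mulr_ge0 //; try nra.
Qed.

Lemma pt (R : realType) (x : R) : 0 < x ->
  (0 <= f_SG x <= 2 * f_h x) /\
  (0 <= (x - 1) * derive1 (@f_SG R) x - f_SG x <=
        2 * ((x - 1) * derive1 (@f_h R) x - f_h x)).
Proof.
move=> x0.
rewrite dSG // dh //.
have t0 : 0 < Num.sqrt x by rewrite sqrtr_gt0.
have g0 : 0 < (x^+2+1)/2 by apply: divr_gt0 => //; apply: ltr_wpDl; [exact: sqr_ge0|].
have S0 : 0 < Num.sqrt ((x^+2+1)/2) by rewrite sqrtr_gt0.
have hx : x = (Num.sqrt x)^+2 by rewrite sqr_sqrtr // ltW.
have hS : (Num.sqrt ((x^+2+1)/2))^+2 = (((Num.sqrt x)^+2)^+2+1)/2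
  by rewrite -hx sqr_sqrtr // ltW.
rewrite /f_SG /f_h.
move: t0 S0 hS hx.
move: (Num.sqrt x) (Num.sqrt ((x^+2+1)/2)) => t S t0 S0 hS hx.
split.
  by have := core1 _ _ t0 S0 hS.
have := core2 _ _ t0 S0 hS.
by rewrite -hx.
Qed.

Theorem proposition5p4 (R : realType) (n : nat) (P Q : 'I_n -> R) :
  (2 <= n)%N -> Gamma P -> Gamma Q ->
  (0 <= M_SG P Q /\ M_SG P Q <= 2 * hdiv P Q) /\
  (0 <= xi_SG P Q /\ xi_SG P Q <= 2 * xi_h P Q).
Proof.
move=> _ [P0 _] [Q0 _].
have key : forall i, let x := P i / Q i in
  (0 <= f_SG x <= 2 * f_h x) /\
  (0 <= (x - 1) * derive1 (@f_SG R) x - f_SG x <=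
        2 * ((x - 1) * derive1 (@f_h R) x - f_h x)).
  by move=> i; apply: pt; apply: divr_gt0.
have xiE : forall f, xi f P Q =
   \sum_(i < n) Q i * ((P i / Q i - 1) * derive1 f (P i / Q i) - f (P i / Q i)).
  move=> f; rewrite /xi /Ef /Cf -sumrB; apply: eq_bigr => i _.
  have qn : Q i != 0 by rewrite gt_eqF.
  rewrite mulrBr mulrA mulrBr mulr1 mulrCA divff // mulr1.
  by [].
rewrite /M_SG /hdiv /xi_SG /xi_h !xiE /Cf !mulr_sumr.
split; split.
- apply: sumr_ge0 => i _; apply: mulr_ge0; first exact: ltW.
  by case: (key i) => /andP[].
- apply: ler_sum => i _; rewrite mulrCA; apply: ler_wpM2l; first exact: ltW.
  by case: (key i) => /andP[].
- apply: sumr_ge0 => i _; apply: mulr_ge0; first exact: ltW.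
  by case: (key i) => _ /andP[].
- apply: ler_sum => i _; rewrite mulrCA; apply: ler_wpM2l; first exact: ltW.
  by case: (key i) => _ /andP[].
Qed.
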